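(* For a comical set $X$, the homotopy $1$-category $\mathrm{ho}_1X$ — whose objects are the $0$-cubes of $X$, whose morphisms from $x$ to $y$ are the homotopy classes of $1$-cubes from $x$ to $y$, whose composition sends $([f],[g])$ to the class of any composite of $f$ and $g$, and whose identity at $x$ is $[x\sigma_1]$ — is a well-defined category (composition is well defined, unital and associative).
   Context: Cubical sets are presheaves on the box category $\square$ (objects $[1]^n=\{0<1\}^n$; morphisms generated by faces $\partial_{i,\varepsilon}$ inserting $\varepsilon$ as $i$-th coordinate, degeneracies $\sigma_i$ deleting the $i$-th coordinate, and max/min connections $\gamma_{i,1},\gamma_{i,0}$); operators act on the right, so for a $0$-cube $x$, $x\sigma_1$ is the degenerate $1$-cube at $x$. A cube is degenerate if it is $x\sigma_i$ or $x\gamma_{i,\varepsilon}$; composites of faces have unique normal forms $\partial_{k_1,\varepsilon_1}\cdots\partial_{k_t,\varepsilon_t}$, $k_1>\dots>k_t$. A marked cubical set is a cubical set with marked cubes of positive dimension containing all degenerate cubes. $\tau_jX$ is $X$ with all cubes of dimension $\ge j+1$ marked. $\square^n_{k,\varepsilon}$ ($n\ge1$, $1\le k\le n$) is $\square^n$ in which a non-degenerate positive-dimensional face in normal form is marked iff none of its factors is $\partial_{k-1,\varepsilon},\partial_{k,0},\partial_{k,1},\partial_{k+1,\varepsilon}$; $\sqcap^n_{k,\varepsilon}$ is the union of codimension-one faces except $\partial_{k,\varepsilon}$, regularly marked; for $n\ge2$, $(\square^n_{k,\varepsilon})''=\tau_{n-2}\square^n_{k,\varepsilon}$ and $(\square^n_{k,\varepsilon})'$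 is $\square^n_{k,\varepsilon}$ with all $(n-1)$-faces other than $\partial_{k,\varepsilon}$ marked. A comical set is a marked cubical set with the right lifting property against all $\sqcap^n_{k,\varepsilon}\hookrightarrow\square^n_{k,\varepsilon}$ and $(\square^n_{k,\varepsilon})'\hookrightarrow(\square^n_{k,\varepsilon})''$. A $1$-cube $f$ goes from $x=f\partial_{1,0}$ to $y=f\partial_{1,1}$. Write a $2$-cube $s$ via its faces $(s\partial_{1,0},s\partial_{1,1},s\partial_{2,0},s\partial_{2,1})$. For $1$-cubes $f,g$ from $x$ to $y$, $f\sim g$ (homotopic) means there is a marked $2$-cube with faces $(g,y\sigma_1,f,y\sigma_1)$; in a comical set this is an equivalence relation, and $[f]$ denotes the class. Given $f$ from $x$ to $y$ and $g$ from $y$ to $z$, a composite of $f$ and $g$ is a $1$-cube $a$, $b$, $c$ or $d$ for which there exists a marked $2$-cube with faces $(a,g,f,z\sigma_1)$, $(f,b,x\sigma_1,g)$, $(f,z\sigma_1,c,g)$ or $(x\sigma_1,g,f,d)$ respectively; in a comical set such composites exist. *)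

(* Defs.v *)
From mathcomp Require Import all_boot.
From Stdlib Require Import ProofIrrelevance.

Set Implicit Arguments.
Unset Strict Implicit.
Unset Printing Implicit Defensive.

(* The box category.  [1]^n is modelled by n-tuples of booleans; a    *)
(* morphism [1]^m -> [1]^n of the box category is a (finite) function *)
(* cube m -> cube n lying in the subcategory generated by faces,      *)
(* degeneracies and connections.  Indices i are 1-based as in the     *)
(* paper.                                                             *)

Notation cube n := (n.-tuple bool).

Definition fid n : {ffun cube n -> cube n} := [ffun x => x].
Definition fcomp m n p (g : {ffun cube n -> cube p}) (f : {ffun cube m -> cube n})
  : {ffun cube m -> cube p} := [ffun x => g (f x)].

Definition face_at n (i : nat) (e : bool) (x : cube n) (j : nat) : bool :=
  if j < i.-1 then nth false x j else if j == i.-1 then e else nth false x j.-1.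
Definition face n (i : nat) (e : bool) : {ffun cube n -> cube n.+1} :=
  [ffun x : cube n => [tuple face_at i e x j | j < n.+1]].

Definition deg_at n (i : nat) (x : cube n.+1) (j : nat) : bool :=
  if j < i.-1 then nth false x j else nth false x j.+1.
Definition deg n (i : nat) : {ffun cube n.+1 -> cube n} :=
  [ffun x : cube n.+1 => [tuple deg_at i x j | j < n]].

(* connection g_{i,e} : [1]^(n+2) -> [1]^(n+1): max (e = true) or
   min (e = false) of the i-th and (i+1)-st coordinates *)
Definition conn_at n (i : nat) (e : bool) (x : cube n.+2) (j : nat) : bool :=
  if j < i.-1 then nth false x j
  else if j == i.-1 then
    (if e then nth false x j || nth false x j.+1
     else nth false x j && nth false x j.+1)
  else nth false x j.+1.
Definition conn n (i : nat) (e : bool) : {ffun cube n.+2 -> cube n.+1} :=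
  [ffun x : cube n.+2 => [tuple conn_at i e x j | j < n.+1]].

Inductive is_box : forall m n, {ffun cube m -> cube n} -> Prop :=
| box_id n : is_box (fid n)
| box_face n i e : 0 < i <= n.+1 -> is_box (face n i e)
| box_deg n i : 0 < i <= n.+1 -> is_box (deg n i)
| box_conn n i e : 0 < i <= n.+1 -> is_box (conn n i e)
| box_comp m n p (g : {ffun cube n -> cube p}) (f : {ffun cube m -> cube n}) :
    is_box g -> is_box f -> is_box (fcomp g f).

Definition Box m n := {f : {ffun cube m -> cube n} | is_box f}.

Definition bid n : Box n n := exist _ (fid n) (box_id n).
Definition bcomp m n p (g : Box n p) (f : Box m n) : Box m p :=
  exist _ (fcomp (proj1_sig g) (proj1_sig f))
          (box_comp (proj2_sig g) (proj2_sig f)).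

Lemma box_eq m n (f g : Box m n) : proj1_sig f = proj1_sig g -> f = g.
Proof.
case: f => f pf; case: g => g pg /= E; subst g.
by rewrite (proof_irrelevance _ pf pg).
Qed.

Lemma fcompA m n p q (h : {ffun cube p -> cube q}) (g : {ffun cube n -> cube p})
  (f : {ffun cube m -> cube n}) : fcomp h (fcomp g f) = fcomp (fcomp h g) f.
Proof. by apply/ffunP => x; rewrite !ffunE. Qed.

Lemma bcompA m n p q (h : Box p q) (g : Box n p) (f : Box m n) :
  bcomp h (bcomp g f) = bcomp (bcomp h g) f.
Proof. by apply: box_eq; rewrite /= fcompA. Qed.

Lemma bcomp1 m n (f : Box m n) : bcomp f (bid m) = f.
Proof. by apply: box_eq; apply/ffunP => x; rewrite /= !ffunE. Qed.

Lemma bcom1 m n (f : Box m n) : bcomp (bid n) f = f.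
Proof. by apply: box_eq; apply/ffunP => x; rewrite /= !ffunE. Qed.

(* Cubical sets: presheaves on the box category, operators acting on  *)
(* the right:  act f x = x f.                                         *)

Record cset := CSet {
  cs :> nat -> Type;
  act : forall m n, Box m n -> cs n -> cs m;
  act_id : forall n (x : cs n), act (bid n) x = x;
  act_comp : forall m n p (g : Box n p) (f : Box m n) (x : cs p),
      act (bcomp g f) x = act f (act g x)
}.
Arguments act {c m n} f x.

Inductive degen_gen : forall n m, {ffun cube n -> cube m} -> Prop :=
| dg_deg n i : 0 < i <= n.+1 -> degen_gen (deg n i)
| dg_conn n i e : 0 < i <= n.+1 -> degen_gen (conn n i e).

Definition degenerate (X : cset) n (x : X n) : Prop :=
  exists m (f : Box n m) (y : X m), degen_gen (proj1_sig f) /\ x = act f y.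

Lemma degen_gen_pos n m (g : {ffun cube n -> cube m}) : degen_gen g -> 0 < n.
Proof. by case. Qed.

Lemma degenerate_pos (X : cset) n (x : X n) : degenerate x -> 0 < n.
Proof. by case=> m [f [y [H _]]]; exact: degen_gen_pos H. Qed.

Record mcset := MCSet {
  mcs :> cset;
  marked : forall n, mcs n -> Prop;
  marked_pos : forall x : mcs 0, ~ marked x;
  marked_degen : forall n (x : mcs n), degenerate x -> marked x
}.
Arguments marked {m n} x.

Record mmap (A X : mcset) := MMap {
  mfun :> forall n, A n -> X n;
  mnat : forall m n (f : Box m n) (x : A n), mfun (act f x) = act f (mfun x);
  mmark : forall n (x : A n), marked x -> marked (mfun x)
}.

Definition rlp (A B : mcset) (i : mmap A B) (X : mcset) : Prop :=
  forall f : mmap A X, exists g : mmap B X, forall n (a : A n), g n (i n a) = f n a.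

Definition rep_act n m p (f : Box m p) (x : Box p n) : Box m n := bcomp x f.

Lemma rep_act_id n p (x : Box p n) : rep_act (bid p) x = x.
Proof. exact: bcomp1. Qed.

Lemma rep_act_comp n m p q (g : Box p q) (f : Box m p) (x : Box q n) :
  rep_act (bcomp g f) x = rep_act f (rep_act g x).
Proof. by rewrite /rep_act bcompA. Qed.

Definition Rep n : cset := @CSet (fun m => Box m n) (@rep_act n)
  (@rep_act_id n) (@rep_act_comp n).

(* Faces in normal form d_{k1,e1} ... d_{kt,et}, k1 > ... > kt, given as
   words [:: (k1,e1); ...; (kt,et)].  The factor d_{kt,et} is applied
   first. *)
Definition ins (s : seq bool) (i : nat) (e : bool) : seq bool :=
  take i.-1 s ++ e :: drop i.-1 s.

Definition apply_word (w : seq (nat * bool)) (s : seq bool) : seq bool :=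
  foldr (fun a s => ins s a.1 a.2) s w.

Definition is_face_word m n (phi : Box m n) (w : seq (nat * bool)) : Prop :=
  [/\ size w + m = n,
      sorted (fun a b : nat * bool => b.1 < a.1) w,
      all (fun a : nat * bool => 0 < a.1 <= n) w
    & forall x : cube m, tval (proj1_sig phi x) = apply_word w (tval x)].

Definition allowed (k : nat) (e : bool) (a : nat * bool) : bool :=
  ~~ [|| (a.1 == k.-1) && (a.2 == e), a.1 == k | (a.1 == k.+1) && (a.2 == e)].

Definition marked_box n k e m (phi : Box m n) : Prop :=
  @degenerate (Rep n) m phi \/
  (0 < m /\ exists w, is_face_word phi w /\ all (allowed k e) w).

Lemma marked_box_pos n k e (phi : Box 0 n) : ~ marked_box k e phi.
Proof. by case=> [/degenerate_pos|[]]. Qed.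

Definition BoxM n k e : mcset :=
  @MCSet (Rep n) (@marked_box n k e) (@marked_box_pos n k e)
    (fun m phi H => or_introl H).

Definition marked_box' n k e m (phi : Box m n) : Prop :=
  marked_box k e phi \/
  (0 < m /\ m.+1 = n /\
   exists i d, is_face_word phi [:: (i, d)] /\ ~ (i = k /\ d = e)).

Lemma marked_box'_pos n k e (phi : Box 0 n) : ~ marked_box' k e phi.
Proof. by case=> [/marked_box_pos|[]]. Qed.

Definition BoxM' n k e : mcset :=
  @MCSet (Rep n) (@marked_box' n k e) (@marked_box'_pos n k e)
    (fun m phi H => or_introl (or_introl H)).

Definition marked_box'' n k e m (phi : Box m n) : Prop :=
  marked_box k e phi \/ (0 < m /\ n.-1 <= m).

Lemma marked_box''_pos n k e (phi : Box 0 n) : ~ marked_box'' k e phi.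
Proof. by case=> [/marked_box_pos|[]]. Qed.

Definition BoxM'' n k e : mcset :=
  @MCSet (Rep n) (@marked_box'' n k e) (@marked_box''_pos n k e)
    (fun m phi H => or_introl (or_introl H)).

Lemma prime_mark n k e m (phi : Box m n) :
  marked_box' k e phi -> marked_box'' k e phi.
Proof.
case=> [H|[H1 [H2 _]]]; [by left | right; split => //].
by rewrite -H2.
Qed.

Definition prime_incl n k e : mmap (BoxM' n k e) (BoxM'' n k e) :=
  @MMap (BoxM' n k e) (BoxM'' n k e) (fun m x => x)
    (fun m p f x => erefl) (@prime_mark n k e).

(* The open box sqcap^{n'+1}_{k,e}: union of the codimension-one faces *)
(* d_{i,d}, (i,d) <> (k,e), of box^{n'+1}, with the marking inherited  *)
(* from box^{n'+1}_{k,e}.                                              *)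

Definition in_obox n' k e m (phi : Box m n'.+1) : Prop :=
  exists i d (psi : Box m n'), [/\ 0 < i <= n'.+1, ~ (i = k /\ d = e)
     & proj1_sig phi = fcomp (face n' i d) (proj1_sig psi)].

Lemma in_obox_act n' k e m p (f : Box m p) (phi : Box p n'.+1) :
  in_obox k e phi -> in_obox k e (bcomp phi f).
Proof.
case=> i [d [psi [Hi Hn E]]]; exists i, d, (bcomp psi f); split => //=.
by rewrite E fcompA.
Qed.

Definition obox_cs n' k e (m : nat) := {phi : Box m n'.+1 | in_obox k e phi}.

Definition obox_act n' k e m p (f : Box m p) (x : obox_cs n' k e p) :
  obox_cs n' k e m :=
  exist _ (bcomp (proj1_sig x) f) (in_obox_act f (proj2_sig x)).

Lemma obox_eq n' k e m (x y : obox_cs n' k e m) :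
  proj1_sig x = proj1_sig y -> x = y.
Proof.
case: x => x px; case: y => y py /= E; subst y.
by rewrite (proof_irrelevance _ px py).
Qed.

Lemma obox_act_id n' k e p (x : obox_cs n' k e p) : obox_act (bid p) x = x.
Proof. by apply: obox_eq; rewrite /= bcomp1. Qed.

Lemma obox_act_comp n' k e m p q (g : Box p q) (f : Box m p)
  (x : obox_cs n' k e q) :
  obox_act (bcomp g f) x = obox_act f (obox_act g x).
Proof. by apply: obox_eq; rewrite /= bcompA. Qed.

Definition OBoxC n' k e : cset :=
  @CSet (@obox_cs n' k e) (@obox_act n' k e)
    (@obox_act_id n' k e) (@obox_act_comp n' k e).

Definition marked_obox n' k e m (x : OBoxC n' k e m) : Prop :=
  marked_box k e (proj1_sig x).

Lemma marked_obox_pos n' k e (x : OBoxC n' k e 0) : ~ marked_obox x.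
Proof. exact: marked_box_pos. Qed.

Lemma marked_obox_degen n' k e m (x : OBoxC n' k e m) :
  degenerate x -> marked_obox x.
Proof.
case=> p [f [y [H E]]]; left; exists p, f, (proj1_sig y); split => //.
by rewrite E.
Qed.

Definition OBox n' k e : mcset :=
  @MCSet (OBoxC n' k e) (@marked_obox n' k e)
    (@marked_obox_pos n' k e) (@marked_obox_degen n' k e).

Definition obox_incl n' k e : mmap (OBox n' k e) (BoxM n'.+1 k e) :=
  @MMap (OBox n' k e) (BoxM n'.+1 k e) (fun m x => proj1_sig x)
    (fun m p f x => erefl) (fun m x H => H).

(* Comical sets: RLP against sqcap^n_{k,e} -> box^n_{k,e} (n >= 1,
   written n = n'+1) and (box^n_{k,e})' -> (box^n_{k,e})'' (n >= 2). *)
Definition comical (X : mcset) : Prop :=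
  (forall n' k e, 0 < k <= n'.+1 -> rlp (obox_incl n' k e) X) /\
  (forall n k e, 2 <= n -> 0 < k <= n -> rlp (prime_incl n k e) X).

Definition bface n i e (H : 0 < i <= n.+1) : Box n n.+1 :=
  exist _ (face n i e) (box_face e H).

Definition d1 (e : bool) : Box 0 1 := @bface 0 1 e isT.
Definition d21 (e : bool) : Box 1 2 := @bface 1 1 e isT.
Definition d22 (e : bool) : Box 1 2 := @bface 1 2 e isT.
Definition s1 : Box 1 0 := exist _ (deg 0 1) (@box_deg 0 1 isT).

Section Low.
Variable X : mcset.

Definition hom1 (x y : X 0) (f : X 1) : Prop :=
  act (d1 false) f = x /\ act (d1 true) f = y.

Definition idc (x : X 0) : X 1 := act s1 x.

Definition marked_sq (a b c d : X 1) : Prop :=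
  exists s : X 2, marked s /\
    [/\ act (d21 false) s = a, act (d21 true) s = b,
        act (d22 false) s = c & act (d22 true) s = d].

Definition homotopic (y : X 0) (f g : X 1) : Prop :=
  marked_sq g (idc y) f (idc y).

Definition is_composite (x z : X 0) (f g a : X 1) : Prop :=
  marked_sq a g f (idc z) \/ marked_sq f a (idc x) g \/
  marked_sq f (idc z) a g \/ marked_sq (idc x) g f a.

End Low.

(* Main.v *)
Require Import Defs.
From mathcomp Require Import all_boot zify.
From Stdlib Require Import ProofIrrelevance ClassicalEpsilon.
Set Warnings "-notation-overridden".
Set Implicit Arguments. Unset Strict Implicit. Unset Printing Implicit Defensive.

Lemma nth_mk n (F : nat -> bool) k : nth false (tval [tuple F (nat_of_ord j) | j < n]) k = if k < n then F k else false.
Proof. case: ltnP => H. by rewrite (nth_mktuple _ _ (Ordinal H)).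
by rewrite nth_default // size_tuple. Qed.
Lemma tuple_ext n (s t : cube n) : (forall k, k < n -> nth false s k = nth false t k) -> s = t.
Proof. move=> H; apply/val_inj/(eq_from_nth (x0:=false)); rewrite ?size_tuple // => k; exact: H. Qed.
Lemma nth_face n i e (x : cube n) k : nth false (face n i e x) k = if k < n.+1 then face_at i e x k else false.
Proof. by rewrite ffunE nth_mk. Qed.
Lemma nth_deg n i (x : cube n.+1) k : nth false (deg n i x) k = if k < n then deg_at i x k else false.
Proof. by rewrite ffunE nth_mk. Qed.
Lemma nth_conn n i e (x : cube n.+2) k : nth false (conn n i e x) k = if k < n.+1 then conn_at i e x k else false.
Proof. by rewrite ffunE nth_mk. Qed.
Lemma fcompE m n p (g : {ffun cube n -> cube p}) (f : {ffun cube m -> cube n}) x : fcomp g f x = g (f x).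
Proof. by rewrite ffunE. Qed.
Lemma fidE n (x : cube n) : fid n x = x.
Proof. by rewrite ffunE. Qed.

Ltac boxeq := apply/ffunP; case => -[|[] [|[] [|[] [|? ?]]]] ? //; apply: tuple_ext;
  let k := fresh "k" in let Hk := fresh "Hk" in
  move=> k Hk; rewrite ?fcompE ?fidE;
  repeat (rewrite ?nth_face ?nth_deg ?nth_conn; unfold face_at, deg_at, conn_at);
  move: k Hk; case=> [|[|[|[|?]]]] //= _;
  try (by repeat match goal with [ b : bool |- _ ] => destruct b end).

Lemma nthF n i d (u : cube n) k : k < n.+1 ->
  nth false (face n i d u) k = if k < i.-1 then nth false u k else if k == i.-1 then d else nth false u k.-1.
Proof. by move=> H; rewrite nth_face H. Qed.
Lemma nthD n i (y : cube n.+1) k : k < n ->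
  nth false (deg n i y) k = if k < i.-1 then nth false y k else nth false y k.+1.
Proof. by move=> H; rewrite nth_deg H. Qed.

Lemma G1 n i d (u : cube n) : deg n i (face n i d u) = u.
Proof.
apply: tuple_ext => k Hk; rewrite nthD //.
case: ifP => H1; rewrite nthF //; try lia.
 by rewrite H1.
rewrite ifF; last lia. rewrite ifF; last lia. by [].
Qed.

Lemma G2 n i d (y : cube n.+1) : 0 < i <= n.+1 -> nth false y i.-1 = d ->
  face n i d (deg n i y) = y.
Proof.
move=> Hi Hy; apply: tuple_ext => k Hk; rewrite nthF //.
case: ifP => H1; first by rewrite nthD //; [rewrite H1 | lia].
case: ifP => H2; first by move/eqP: H2 => ->.
rewrite nthD; last lia. rewrite ifF; last lia. congr nth; lia.
Qed.

Lemma DD n i j (y : cube n.+2) : 0 < i < j ->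
  deg n i (deg n.+1 j y) = deg n j.-1 (deg n.+1 i y).
Proof.
move=> Hij; apply: tuple_ext => k Hk.
rewrite nthD // [in RHS]nthD //.
case: ifP => H1; rewrite nthD; try lia; case: ifP => H2; rewrite ?nthD; try lia.
all: try (repeat case: ifP => ?); try lia.
Qed.

Ltac crush := rewrite ?nth_face ?nth_deg ?nth_conn; unfold face_at, deg_at, conn_at;
  rewrite ?nth_face ?nth_deg ?nth_conn; unfold face_at, deg_at, conn_at;
  rewrite ?nth_face ?nth_deg ?nth_conn; unfold face_at, deg_at, conn_at;
  repeat (case: ifP => ?); try lia; try (congr nth; lia).

Lemma G4 n i j d (v : cube n.+1) : 0 < i < j -> j <= n.+2 ->
  deg n.+1 i (face n.+1 j d v) = face n j.-1 d (deg n i v).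
Proof.
move=> Hij Hj; apply: tuple_ext => k Hk. crush.
Qed.

Lemma is_box_face n i d : is_box (face n i d).
Proof.
case: (ltnP n.+1 i) => H.
  have -> : face n i d = face n n.+1 false.
    apply/ffunP => x; apply: tuple_ext => k Hk; rewrite !nth_face Hk /face_at.
    case: ifP => H1; case: ifP => H2 //; try lia.
    case: ifP => H3; try lia. rewrite nth_default // size_tuple; lia.
  by apply: box_face; rewrite ?leqnn; lia.
case: i H => [|i] H.
  have -> : face n 0 d = face n 1 d by [].
  by apply: box_face; rewrite ?leqnn; lia.
by apply: box_face; lia.
Qed.

Lemma is_box_deg n i : is_box (deg n i).
Proof.
case: (ltnP n.+1 i) => H.
  have -> : deg n i = deg n n.+1.
    apply/ffunP => x; apply: tuple_ext => k Hk; rewrite !nth_deg Hk /deg_at.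
    case: ifP => H1; case: ifP => H2 //; try lia.
  by apply: box_deg; rewrite ?leqnn; lia.
case: i H => [|i] H.
  have -> : deg n 0 = deg n 1 by [].
  by apply: box_deg; rewrite ?leqnn; lia.
by apply: box_deg; lia.
Qed.

Definition bf n i d : Box n n.+1 := exist _ (face n i d) (is_box_face n i d).
Definition bd n i : Box n.+1 n := exist _ (deg n i) (is_box_deg n i).

Lemma actC (X : cset) m n p (g : Box n p) (f : Box m n) (x : X p) :
  act f (act g x) = act (bcomp g f) x.
Proof. by rewrite act_comp. Qed.

Lemma act_ext (X : cset) m n (f g : Box m n) (x : X n) :
  proj1_sig f = proj1_sig g -> act f x = act g x.
Proof. by move=> /box_eq ->. Qed.

Lemma degen_marked (X : mcset) m p (g : Box m p) (y : X p) :
  degen_gen (proj1_sig g) -> marked (act g y).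
Proof. move=> H; apply: marked_degen; by exists p, g, y. Qed.

Definition good m n (phi : Box m n) i d := forall q, nth false (proj1_sig phi q) i.-1 = d.

Lemma good_nonempty m n (phi : Box m n) i d d' : good phi i d -> good phi i d' -> d = d'.
Proof. move=> H1 H2; have q : cube m := [tuple false | _ < m]. by rewrite -(H1 q) (H2 q). Qed.

Lemma good_face m n (psi : Box m n) i d : 0 < i <= n.+1 ->
  good (bcomp (bf n i d) psi) i d.
Proof. move=> Hi q /=; rewrite fcompE nthF; last lia. rewrite ifF; last lia. by rewrite eqxx. Qed.

Definition goodb m n (phi : Box m n.+1) k e (p : 'I_n.+1 * bool) : bool :=
  [forall q : cube m, nth false (proj1_sig phi q) p.1 == p.2] && ((p.1.+1, p.2) != (k, e)).

Definition glueF (X : mcset) n1 k e (x : nat -> bool -> X n1.+1) m (phi : Box m n1.+2) : X m :=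
  match [pick p | goodb phi k e p] with
  | Some p => act (bcomp (bd n1.+1 p.1.+1) phi) (x p.1.+1 p.2)
  | None => act (bcomp (bd n1.+1 1) phi) (x 1 false) end.

Definition compat (X : mcset) n1 k e (x : nat -> bool -> X n1.+1) :=
  forall i j d d', 0 < i -> i < j -> j <= n1.+2 -> (i, d) != (k, e) -> (j, d') != (k, e) ->
    act (bf n1 j.-1 d') (x i d) = act (bf n1 i d) (x j d').

Lemma WD0 (X : mcset) n1 k e (x : nat -> bool -> X n1.+1) m (phi : Box m n1.+2) i j d d' :
  compat k e x -> good phi i d -> good phi j d' -> 0 < i -> i < j -> j <= n1.+2 ->
  (i, d) != (k, e) -> (j, d') != (k, e) ->
  act (bcomp (bd n1.+1 i) phi) (x i d) = act (bcomp (bd n1.+1 j) phi) (x j d').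
Proof.
move=> HC Hi Hj H0 Hij Hjn Hne Hne'.
set chi := bcomp (bd n1 j.-1) (bcomp (bd n1.+1 i) phi).
have E1 : bcomp (bd n1.+1 i) phi = bcomp (bf n1 j.-1 d') chi.
  apply: box_eq; apply/ffunP => q /=; rewrite !fcompE.
  rewrite G2 //; first lia.
  rewrite nthD; last lia. rewrite ifF; last lia.
  by rewrite -(Hj q); congr nth; lia.
have E2 : bcomp (bd n1.+1 j) phi = bcomp (bf n1 i d) chi.
  apply: box_eq; apply/ffunP => q /=; rewrite !fcompE.
  rewrite -DD; last lia. rewrite G2 //; first lia.
  rewrite nthD; last lia. rewrite ifT; last lia. exact: Hi.
by rewrite E1 E2 -!actC HC.
Qed.

Lemma WD (X : mcset) n1 k e (x : nat -> bool -> X n1.+1) m (phi : Box m n1.+2) i j d d' :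
  compat k e x -> good phi i d -> good phi j d' -> 0 < i <= n1.+2 -> 0 < j <= n1.+2 ->
  (i, d) != (k, e) -> (j, d') != (k, e) ->
  act (bcomp (bd n1.+1 i) phi) (x i d) = act (bcomp (bd n1.+1 j) phi) (x j d').
Proof.
move=> HC Hi Hj Hib Hjb Hne Hne'.
case: (ltngtP i j) => Hij.
- apply: (WD0 HC Hi Hj) => //; lia.
- symmetry; apply: (WD0 HC Hj Hi) => //; lia.
- subst j; by rewrite (good_nonempty Hi Hj).
Qed.

Lemma F_spec (X : mcset) n1 k e (x : nat -> bool -> X n1.+1) m (phi : Box m n1.+2) i d :
  compat k e x -> good phi i d -> 0 < i <= n1.+2 -> (i, d) != (k, e) ->
  glueF k e x phi = act (bcomp (bd n1.+1 i) phi) (x i d).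
Proof.
move=> HC Hi Hib Hne; rewrite /glueF; case: pickP => [p|].
  case/andP => /forallP Hp Hpne.
  have Hgp : good phi p.1.+1 p.2 by move=> q; move/eqP: (Hp q).
  have Hpl := ltn_ord p.1.
  apply: (WD HC Hgp Hi) => //; lia.
have Hil : i.-1 < n1.+2 by lia.
move/(_ (Ordinal Hil, d)); rewrite /goodb /=.
have -> : (i.-1).+1 = i by lia.
rewrite Hne andbT => /forallP []; move=> q; by rewrite Hi.
Qed.

Lemma obox_good n1 k e m (phi : Box m n1.+2) : in_obox k e phi ->
  exists i d, [/\ good phi i d, 0 < i <= n1.+2 & (i, d) != (k, e)].
Proof.
case=> i [d [psi [Hib Hne E]]]; exists i, d; split => //.
- move=> q; rewrite E fcompE nthF; last lia. rewrite ifF; last lia. by rewrite eqxx.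
- apply/negP => /eqP [H1 H2]; exact: Hne.
Qed.

Lemma good_comp m p n (phi : Box p n) (f : Box m p) i d : good phi i d -> good (bcomp phi f) i d.
Proof. move=> H q /=; by rewrite fcompE. Qed.

Definition wordhyp (X : mcset) n1 k e (x : nat -> bool -> X n1.+1) :=
  forall m (phi : Box m n1.+2) w, 0 < m -> in_obox k e phi -> is_face_word phi w -> all (allowed k e) w ->
  exists i d, [/\ good phi i d, 0 < i <= n1.+2, (i, d) != (k, e) &
     marked (act (bcomp (bd n1.+1 i) phi) (x i d))].

Lemma glue (X : mcset) n1 k e (x : nat -> bool -> X n1.+1) :
  compat k e x -> wordhyp k e x ->
  exists G : mmap (OBox n1.+1 k e) X, forall m (s : OBox n1.+1 k e m), G m s = glueF k e x (proj1_sig s).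
Proof.
move=> HC HW.
have Hnat : forall m p (f : Box m p) (s : OBox n1.+1 k e p),
    glueF k e x (proj1_sig (act f s)) = act f (glueF k e x (proj1_sig s)).
  move=> m p f [phi Hphi] /=.
  have [i [d [Hg Hib Hne]]] := obox_good Hphi.
  rewrite (F_spec HC (good_comp f Hg)) // (F_spec HC Hg) //.
  by rewrite actC bcompA.
have Hmk : forall m (s : OBox n1.+1 k e m), marked s -> marked (glueF k e x (proj1_sig s)).
  move=> m [phi Hphi] /=; rewrite /marked_obox /= => -[Hdeg|[Hm [w [Hw Hall]]]].
  - have [i [d [Hg Hib Hne]]] := obox_good Hphi.
    rewrite (F_spec HC Hg) //.
    case: Hdeg => p [g [y [Hgen Hy]]].
    have -> : phi = bcomp y g by [].
    rewrite bcompA -actC. exact: degen_marked.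
  - have [i [d [Hg Hib Hne Hmk]]] := HW _ _ _ Hm Hphi Hw Hall.
    by rewrite (F_spec HC Hg).
exists (@MMap (OBox n1.+1 k e) X (fun m s => glueF k e x (proj1_sig s)) Hnat Hmk).
by [].
Qed.

Lemma bf_obox n1 k e i d : 0 < i <= n1.+2 -> (i, d) != (k, e) -> in_obox k e (bf n1.+1 i d).
Proof.
move=> Hib Hne; exists i, d, (bid n1.+1); split => //.
- by move=> [H1 H2]; move: Hne; rewrite H1 H2 eqxx.
- by apply/ffunP => q /=; rewrite fcompE fidE.
Qed.

Lemma bid_word n : is_face_word (bid n) [::].
Proof. split => //= q; by rewrite fidE. Qed.

Lemma fill (X : mcset) n1 k e (x : nat -> bool -> X n1.+1) :
  comical X -> 0 < k <= n1.+2 -> compat k e x -> wordhyp k e x ->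
  exists T : X n1.+2, marked T /\
    forall i d, 0 < i <= n1.+2 -> (i, d) != (k, e) -> act (bf n1.+1 i d) T = x i d.
Proof.
move=> [Hc _] Hk HC HW.
have [G HG] := glue HC HW.
have [g Hg] := Hc n1.+1 k e Hk G.
exists (g _ (bid n1.+2)); split.
  apply: (mmark g); right; split => //; exists [::]; split => //; exact: bid_word.
move=> i d Hib Hne.
rewrite -(mnat g) /= /rep_act bcom1.
have := Hg _ (exist _ (bf n1.+1 i d) (bf_obox Hib Hne)); rewrite /= => ->.
rewrite HG /= (F_spec HC (i := i) (d := d)) //.
  rewrite (act_ext (g := bid _)) ?act_id //.
  by apply/ffunP => q /=; rewrite fcompE fidE G1.
move=> q /=; rewrite nthF; last lia. rewrite ifF; last lia. by rewrite eqxx.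
Qed.

Lemma tval_face n a b (x : cube n) : 0 < a <= n.+1 -> tval (face n a b x) = ins (tval x) a b.
Proof.
move=> Ha; apply: (eq_from_nth (x0 := false)).
  rewrite size_tuple /ins size_cat size_take /= size_drop size_tuple.
  case: ifP => H; lia.
move=> k; rewrite size_tuple => Hk; rewrite nthF // /ins nth_cat size_take size_tuple.
have -> : (if a.-1 < n then a.-1 else n) = a.-1 by case: ifP => H; lia.
case: ifP => H1; first by rewrite nth_take.
case: ifP => H2.
  by move/eqP: H2 => ->; rewrite subnn.
have -> : k - a.-1 = (k.-1 - a.-1).+1 by lia.
by rewrite /= nth_drop; congr nth; lia.
Qed.

Lemma wf0 n (phi : Box n n) : is_face_word phi [::] -> proj1_sig phi = fid n.
Proof. case=> _ _ _ H; apply/ffunP => q; rewrite fidE; apply/val_inj; exact: H. Qed.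

Lemma wf1 n (phi : Box n n.+1) a b : is_face_word phi [:: (a, b)] ->
  0 < a <= n.+1 /\ proj1_sig phi = face n a b.
Proof.
case=> _ _ /= /andP [Ha _] H; split => //.
apply/ffunP => q; apply/val_inj; rewrite /= H tval_face //.
Qed.

Lemma wf2 n (phi : Box n n.+2) a1 b1 a2 b2 : is_face_word phi [:: (a1, b1); (a2, b2)] ->
  [/\ 0 < a2, a2 < a1, a1 <= n.+2 & proj1_sig phi = fcomp (face n.+1 a1 b1) (face n a2 b2)].
Proof.
case=> _ /= /andP [H21 _] /and3P [/andP [Ha1 Ha1'] /andP [Ha2 Ha2'] _] H; split => //.
apply/ffunP => q; apply/val_inj; rewrite /= H fcompE /= tval_face; last lia.
by rewrite tval_face //; lia.
Qed.

Lemma allowed_ne k e a b : allowed k e (a, b) -> (a, b) != (k, e).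
Proof.
rewrite /allowed /= => H; apply/negP => /eqP [H1 H2]; move: H; rewrite H1 eqxx /=.
by rewrite orbT.
Qed.

Lemma wordhyp_ok (X : mcset) n1 k e (x : nat -> bool -> X n1.+1) : n1 <= 1 ->
  (forall a b, 0 < a <= n1.+2 -> allowed k e (a, b) -> marked (x a b)) ->
  (forall a1 b1 a2 b2, 0 < a2 -> a2 < a1 -> a1 <= n1.+2 -> allowed k e (a1, b1) ->
     allowed k e (a2, b2) -> marked (act (bf n1 a1.-1 b1) (x a2 b2))) ->
  wordhyp k e x.
Proof.
move=> Hn1 HM1 HM2 m phi w Hm Hob Hw Hallw.
have Hsz := Hw; case: Hsz => Hsz _ _ _.
case: w Hw Hallw Hsz => [|[a1 b1] [|[a2 b2] [|w3 w]]] Hw Hallw Hsz /=.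
- exfalso; have Em : m = n1.+2 by move: Hsz => /=; lia. subst m.
  have [i [d [Hg Hib Hne]]] := obox_good Hob.
  have := Hg (nseq_tuple n1.+2 (~~ d)); rewrite (wf0 Hw) fidE.
  have -> : tval (nseq_tuple n1.+2 (~~ d)) = nseq n1.+2 (~~ d) by []. rewrite nth_nseq.
  rewrite ifT; last lia. by case: (d).
- simpl in Hsz. have Em : m = n1.+1 by lia. subst m.
  have [Ha Ep] := wf1 Hw.
  move: Hallw => /= /andP [Hal _].
  exists a1, b1; split.
  + by move=> q; rewrite Ep nthF; [rewrite ifF ?eqxx //; lia | lia].
  + done.
  + exact: allowed_ne.
  + rewrite (act_ext (g := bid _)) ?act_id; first exact: HM1.
    by apply/ffunP => q /=; rewrite fcompE Ep G1 fidE.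
- simpl in Hsz. have Em : m = n1 by lia. subst m.
  have [H0 H21 Ha1 Ep] := wf2 Hw.
  move: Hallw => /= /and3P [Hal1 Hal2 _].
  exists a2, b2; split.
  + move=> q; rewrite Ep fcompE nthF; last lia. rewrite ifT; last lia.
    rewrite nthF; last lia. rewrite ifF; last lia. by rewrite eqxx.
  + lia.
  + exact: allowed_ne.
  + rewrite (act_ext (g := bf n1 a1.-1 b1)); first exact: HM2.
    apply/ffunP => q /=; rewrite fcompE Ep fcompE G4 //; last lia. by rewrite G1.
- simpl in Hsz; lia.
Qed.

Lemma yoneda_mark (X : mcset) n1 k e (T : X n1.+2) : comical X -> 0 < k <= n1.+2 ->
  (forall m (phi : Box m n1.+2), marked_box' k e phi -> marked (act phi T)) ->
  marked (act (bf n1.+1 k e) T).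
Proof.
move=> [_ Hp] Hk HY.
have Hnat : forall m p (f : Box m p) (phi : BoxM' n1.+2 k e p),
  act (act f phi) T = act f (act phi T) by move=> m p f phi; rewrite actC.
have [g Hg] := Hp n1.+2 k e isT Hk (@MMap (BoxM' n1.+2 k e) X (fun m phi => act phi T) Hnat HY).
have := Hg _ (bf n1.+1 k e); rewrite /= => <-.
apply: (mmark g); right; split => //.
Qed.

Lemma yoneda_ok (X : mcset) n1 k e (T : X n1.+2) : n1 <= 1 ->
  marked T ->
  (forall i d, 0 < i <= n1.+2 -> (i, d) != (k, e) -> marked (act (bf n1.+1 i d) T)) ->
  (forall a1 b1 a2 b2, 0 < a2 -> a2 < a1 -> a1 <= n1.+2 -> allowed k e (a1, b1) ->
     allowed k e (a2, b2) -> marked (act (bf n1 a2 b2) (act (bf n1.+1 a1 b1) T))) ->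
  forall m (phi : Box m n1.+2), marked_box' k e phi -> marked (act phi T).
Proof.
move=> Hn1 HT HF HE m phi [[Hdeg|[Hm [w [Hw Hallw]]]] | [Hm [Hmn [i [d [Hw Hne]]]]]].
- case: Hdeg => p [g [y [Hgen Hy]]].
  have -> : phi = bcomp y g by [].
  rewrite -actC; exact: degen_marked.
- have Hsz := Hw; case: Hsz => Hsz _ _ _.
  case: w Hw Hallw Hsz => [|[a1 b1] [|[a2 b2] [|w3 w]]] Hw Hallw Hsz /=.
  + have Em : m = n1.+2 by move: Hsz => /=; lia. subst m. by rewrite (act_ext (g := bid _)) ?act_id // (wf0 Hw).
  + simpl in Hsz. have Em : m = n1.+1 by lia. subst m.
    have [Ha Ep] := wf1 Hw.
    move: Hallw => /= /andP [Hal _].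
    rewrite (act_ext (g := bf n1.+1 a1 b1)) //. apply: HF => //. exact: allowed_ne.
  + simpl in Hsz. have Em : m = n1 by lia. subst m.
    have [H0 H21 Ha1 Ep] := wf2 Hw.
    move: Hallw => /= /and3P [Hal1 Hal2 _].
    rewrite (act_ext (g := bcomp (bf n1.+1 a1 b1) (bf n1 a2 b2))) //.
    rewrite act_comp; exact: HE.
  + simpl in Hsz; lia.
- have Em : m = n1.+1 by lia. subst m.
  have [Ha Ep] := wf1 Hw.
  rewrite (act_ext (g := bf n1.+1 i d)) //. apply: HF => //.
  by apply/negP => /eqP [H1 H2]; apply: Hne.
Qed.

Lemma box0_eq m (f g : Box m 0) : f = g.
Proof. apply: box_eq; apply/ffunP => q; apply: tuple_ext => k; lia. Qed.

Lemma act0 (X : cset) m (f g : Box m 0) (z : X 0) : act f z = act g z.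
Proof. by rewrite (box0_eq f g). Qed.

Lemma idc_end (X : mcset) e (z : X 0) : act (d1 e) (idc z) = z.
Proof. by rewrite /idc actC (act0 _ (bid 0)) act_id. Qed.

Lemma idc_marked (X : mcset) (z : X 0) : marked (idc z).
Proof. apply: degen_marked; rewrite /=; exact: (@dg_deg 0 1). Qed.

Lemma corner (X : mcset) (s : X 2) eps del :
  act (d1 eps) (act (d21 del) s) = act (d1 del) (act (d22 eps) s).
Proof. rewrite !actC; apply: act_ext => /=; boxeq. Qed.

Lemma bf1 (X : cset) d (s : X 2) : act (bf 1 1 d) s = act (d21 d) s.
Proof. by apply: act_ext. Qed.
Lemma bf2 (X : cset) d (s : X 2) : act (bf 1 2 d) s = act (d22 d) s.
Proof. by apply: act_ext. Qed.
Lemma bf0 (X : cset) d (s : X 1) : act (bf 0 1 d) s = act (d1 d) s.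
Proof. by apply: act_ext. Qed.


Definition sqe (X : mcset) (E1 E2 E3 : bool -> bool -> X 1) (i : nat) (d : bool) (j : nat) (dl : bool) : X 1 :=
  match i, j with
  | 1, 1 => E3 d dl | 1, _ => E2 d dl
  | 2, 1 => E3 dl d | 2, _ => E1 d dl
  | _, 1 => E2 dl d | _, _ => E1 dl d end.

Definition hasF (X : mcset) (a b c d : X 1) (s : X 2) :=
  marked s /\ [/\ act (d21 false) s = a, act (d21 true) s = b, act (d22 false) s = c & act (d22 true) s = d].

Definition msq (X : mcset) (E1 E2 E3 : bool -> bool -> X 1) i d :=
  marked_sq (sqe E1 E2 E3 i d 1 false) (sqe E1 E2 E3 i d 1 true) (sqe E1 E2 E3 i d 2 false) (sqe E1 E2 E3 i d 2 true).

Lemma sqe_compat (X : mcset) (E1 E2 E3 : bool -> bool -> X 1) i j d d' :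
  0 < i -> i < j -> j <= 3 -> sqe E1 E2 E3 i d j.-1 d' = sqe E1 E2 E3 j d' i d.
Proof. by move: i j => [|[|[|[|i]]]] [|[|[|[|j]]]]. Qed.

Lemma FFlt j k e dl : 0 < j -> j < k -> k <= 3 ->
  fcomp (face 2 k e) (face 1 j dl) = fcomp (face 2 j dl) (face 1 k.-1 e).
Proof. move: j k => [|[|[|[|j]]]] [|[|[|[|k]]]] //= _ _ _; boxeq. Qed.

Lemma FFge j k e dl : 0 < k -> k <= j -> j <= 2 ->
  fcomp (face 2 k e) (face 1 j dl) = fcomp (face 2 j.+1 dl) (face 1 k e).
Proof. move: j k => [|[|[|[|j]]]] [|[|[|[|k]]]] //= _ _ _; boxeq. Qed.

Lemma cube3 (X : mcset) (E1 E2 E3 : bool -> bool -> X 1) k e :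
  comical X -> 0 < k <= 3 ->
  (forall i d, 0 < i <= 3 -> (i, d) != (k, e) -> msq E1 E2 E3 i d) ->
  (forall a1 b1 a2 b2, 0 < a2 -> a2 < a1 -> a1 <= 3 -> allowed k e (a1, b1) -> allowed k e (a2, b2) ->
     marked (sqe E1 E2 E3 a2 b2 a1.-1 b1)) ->
  msq E1 E2 E3 k e.
Proof.
move=> HX Hk HF HE.
set S := sqe E1 E2 E3.
pose P i d (s : X 2) := hasF (S i d 1 false) (S i d 1 true) (S i d 2 false) (S i d 2 true) s.
have inh : inhabited (X 2) by constructor; exact: (act (bd 1 1) (E1 false false)).
pose x i d := epsilon inh (P i d).
have Hx : forall i d, 0 < i <= 3 -> (i, d) != (k, e) -> P i d (x i d).
  move=> i d Hi Hne; apply: epsilon_spec.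
  have [s [Hs [H1 H2 H3 H4]]] := HF i d Hi Hne; by exists s.
have Hxf : forall i d j dl, 0 < i <= 3 -> (i, d) != (k, e) -> 0 < j <= 2 ->
    act (bf 1 j dl) (x i d) = S i d j dl.
  move=> i d j dl Hi Hne Hj; have [_ [H1 H2 H3 H4]] := Hx i d Hi Hne.
  move: j Hj => [|[|[|j]]] //= _.
  - by rewrite bf1; case: dl.
  - by rewrite bf2; case: dl.
have HC : compat k e x.
  move=> i j d d' Hi Hij Hj Hne Hne'.
  rewrite !Hxf //; try lia. exact: sqe_compat.
have Hallne : forall a b, allowed k e (a, b) -> (a, b) != (k, e) by move=> a b; exact: allowed_ne.
have HW : wordhyp k e x.
  apply: wordhyp_ok => //.
  - move=> a b Ha Hal; by have [Hm _] := Hx a b Ha (Hallne _ _ Hal).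
  - move=> a1 b1 a2 b2 H0 H21 Ha1 Hal1 Hal2.
    rewrite Hxf //; try lia; last exact: Hallne.
    exact: HE.
have [T [HT HTf]] := fill HX Hk HC HW.
have Hmk : marked (act (bf 2 k e) T).
  apply: yoneda_mark => //.
  apply: yoneda_ok => //.
  - move=> i d Hi Hne; rewrite HTf //. by have [Hm _] := Hx i d Hi Hne.
  - move=> a1 b1 a2 b2 H0 H21 Ha1 Hal1 Hal2.
    rewrite HTf //; try lia; last exact: Hallne.
    rewrite Hxf //; try lia; last exact: Hallne.
    rewrite /S -(sqe_compat E1 E2 E3 b2 b1 H0 H21 Ha1). exact: HE.
have Hface : forall j dl, 0 < j <= 2 -> act (bf 1 j dl) (act (bf 2 k e) T) = S k e j dl.
  move=> j dl Hj; rewrite actC.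
  case: (ltnP j k) => Hjk.
  - rewrite (act_ext (g := bcomp (bf 2 j dl) (bf 1 k.-1 e))); last by apply: FFlt; lia.
    rewrite act_comp HTf //; last first.
      by apply/negP => /eqP [H1 H2]; lia.
      lia.
    rewrite Hxf //; try lia.
      rewrite /S sqe_compat //; lia.
    by apply/negP => /eqP [H1 H2]; lia.
  - rewrite (act_ext (g := bcomp (bf 2 j.+1 dl) (bf 1 k e))); last by apply: FFge; lia.
    rewrite act_comp HTf //; last first.
      by apply/negP => /eqP [H1 H2]; lia.
      lia.
    rewrite Hxf //; try lia.
      rewrite /S -(sqe_compat _ _ _ _ _ (i := k) (j := j.+1)) //; lia.
    by apply/negP => /eqP [H1 H2]; lia.
exists (act (bf 2 k e) T); split => //.
by rewrite -!bf1 -!bf2 !Hface.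
Qed.

Ltac actb := rewrite ?actC; apply: act_ext => /=; boxeq.

Lemma sqD1 (X : mcset) (x y : X 0) (h : X 1) : hom1 x y h -> marked_sq h h (idc x) (idc y).
Proof.
case=> Hx Hy; exists (act (bd 1 1) h); split.
  apply: degen_marked => /=; exact: (@dg_deg 1 1).
split.
- rewrite actC (act_ext (g := bid 1)) ?act_id //=; boxeq.
- rewrite actC (act_ext (g := bid 1)) ?act_id //=; boxeq.
- rewrite -Hx /idc actC actC; apply: act_ext => /=; boxeq.
- rewrite -Hy /idc actC actC; apply: act_ext => /=; boxeq.
Qed.

Lemma sqD2 (X : mcset) (x y : X 0) (h : X 1) : hom1 x y h -> marked_sq (idc x) (idc y) h h.
Proof.
case=> Hx Hy; exists (act (bd 1 2) h); split.
  apply: degen_marked => /=; exact: (@dg_deg 1 2).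
split.
- rewrite -Hx /idc actC actC; apply: act_ext => /=; boxeq.
- rewrite -Hy /idc actC actC; apply: act_ext => /=; boxeq.
- rewrite actC (act_ext (g := bid 1)) ?act_id //=; boxeq.
- rewrite actC (act_ext (g := bid 1)) ?act_id //=; boxeq.
Qed.

Definition bc : Box 2 1 := exist _ (conn 0 1 true) (@box_conn 0 1 true isT).

Lemma sqR (X : mcset) (y : X 0) (h : X 1) : act (d1 true) h = y -> marked_sq h (idc y) h (idc y).
Proof.
move=> Hy; exists (act bc h); split.
  apply: degen_marked => /=; exact: (@dg_conn 0 1 true).
split.
- rewrite actC (act_ext (g := bid 1)) ?act_id //=; boxeq.
- rewrite -Hy /idc actC actC; apply: act_ext => /=; boxeq.
- rewrite actC (act_ext (g := bid 1)) ?act_id //=; boxeq.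
- rewrite -Hy /idc actC actC; apply: act_ext => /=; boxeq.
Qed.

Lemma idc_hom (X : mcset) (z : X 0) : hom1 z z (idc z).
Proof. by split; rewrite idc_end. Qed.

Lemma sqD0 (X : mcset) (z : X 0) : marked_sq (idc z) (idc z) (idc z) (idc z).
Proof. exact: (sqD1 (idc_hom z)). Qed.

Ltac faces := move=> [|[|[|[|?]]]] [] //= _ _; rewrite /msq /=;
  solve [ done | assumption | exact: sqD0 | apply: sqR; eassumption | apply: sqD1; eassumption
        | apply: sqD2; eassumption
        | apply: sqR; match goal with H : hom1 _ _ _ |- _ => exact: (proj2 H) end ].
Ltac edges := move=> [|[|[|[|?]]]] [] [|[|[|[|?]]]] [] //= _ _ _ _ _; exact: idc_marked.

Lemma U1 (X : mcset) (z : X 0) (a a' b c : X 1) : comical X -> act (d1 true) b = z ->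
  marked_sq a b c (idc z) -> marked_sq a' b c (idc z) -> marked_sq a' (idc z) a (idc z).
Proof.
move=> HX Hb H1 H2.
have := @cube3 X (fun q r => if q then idc z else if r then idc z else c)
                 (fun p r => if p then (if r then idc z else b) else (if r then idc z else a))
                 (fun p q => if p then (if q then idc z else b) else (if q then idc z else a')) 1 false HX isT.
rewrite /msq /=. apply.
- faces.
- edges.
Qed.

Definition E4 (X : mcset) (e00 e01 e10 e11 : X 1) := fun p q : bool =>
  if p then (if q then e11 else e10) else (if q then e01 else e00).

Lemma ASSOC (X : mcset) (y z : X 0) (f g h fg gh l : X 1) : comical X ->
  hom1 y z h ->
  marked_sq fg g f (idc y) -> marked_sq gh h g (idc z) -> marked_sq l h fg (idc z) ->
  marked_sq l gh f (idc z).
Proof.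
move=> HX Hh H1 H2 H3.
have := @cube3 X (E4 f (idc z) (idc y) (idc z)) (E4 fg (idc z) g (idc z)) (E4 l h gh h) 2 false HX isT.
rewrite /msq /E4 /=. apply.
- faces.
- edges.
Qed.

Lemma CONV2 (X : mcset) (x z : X 0) (f g b a1 : X 1) : comical X ->
  hom1 x z a1 -> act (d1 true) g = z ->
  marked_sq a1 g f (idc z) -> marked_sq f b (idc x) g -> marked_sq a1 (idc z) b (idc z).
Proof.
move=> HX Ha Hg H1 H2.
have := @cube3 X (E4 (idc x) (idc z) g (idc z)) (E4 f (idc z) b (idc z)) (E4 a1 g a1 (idc z)) 1 true HX isT.
rewrite /msq /E4 /=. apply.
- faces.
- edges.
Qed.

Lemma CONV3 (X : mcset) (y z : X 0) (f g c : X 1) : comical X ->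
  hom1 y z g -> act (d1 true) f = y ->
  marked_sq f (idc z) c g -> marked_sq c g f (idc z).
Proof.
move=> HX Hg Hf H1.
have := @cube3 X (E4 f (idc y) (idc z) (idc z)) (E4 c g g g) (E4 f (idc z) (idc y) (idc z)) 3 false HX isT.
rewrite /msq /E4 /=. apply.
- faces.
- edges.
Qed.

Lemma CONV4 (X : mcset) (x z : X 0) (f g d : X 1) : comical X ->
  hom1 x z d -> act (d1 true) g = z ->
  marked_sq (idc x) g f d -> marked_sq d g f (idc z).
Proof.
move=> HX Hd Hg H1.
have := @cube3 X (E4 f d (idc z) (idc z)) (E4 d d g (idc z)) (E4 (idc x) (idc z) g (idc z)) 3 false HX isT.
rewrite /msq /E4 /=. apply.
- faces.
- edges.
Qed.

Lemma EXIST (X : mcset) (x y z : X 0) (f g : X 1) : comical X -> hom1 x y f -> hom1 y z g ->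
  exists a, marked_sq a g f (idc z).
Proof.
move=> HX [Hf0 Hf1] [Hg0 Hg1].
pose xx (i : nat) (d : bool) : X 1 := if i == 1 then g else if d then idc z else f.
have HC : compat 1 false xx.
  move=> i j d d' Hi Hij Hj Hne Hne'.
  move: i j Hi Hij Hj Hne Hne' => [|[|[|i]]] [|[|[|j]]] //= _ _ _.
  case: d => //= _ _; rewrite !bf0 /xx /=.
  case: d'; by rewrite ?idc_end ?Hg0 ?Hg1 ?Hf1.
have HW : wordhyp 1 false xx.
  apply: wordhyp_ok => //.
  - move=> [|[|[|a]]] [] //= _ _; exact: idc_marked.
  - by move=> [|[|[|a1]]] [] [|[|[|a2]]] [].
have [T [HT HTf]] := fill HX (isT : 0 < 1 <= 2) HC HW.
exists (act (d21 false) T), T; split => //; split => //.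
- by rewrite -bf1 HTf.
- by rewrite -bf2 HTf.
- by rewrite -bf2 HTf.
Qed.

Lemma h_refl (X : mcset) (x y : X 0) (f : X 1) : hom1 x y f -> homotopic y f f.
Proof. case=> _ H; exact: sqR. Qed.

Lemma h_sym (X : mcset) (x y : X 0) (f g : X 1) : comical X -> hom1 x y f ->
  homotopic y f g -> homotopic y g f.
Proof.
move=> HX Hf H; rewrite /homotopic.
apply: (U1 (b := idc y) (c := f) (a := g) (a' := f)) => //.
- exact: idc_end.
- exact: (h_refl Hf).
Qed.

Lemma h_trans (X : mcset) (y : X 0) (f g h : X 1) : comical X ->
  homotopic y f g -> homotopic y g h -> homotopic y f h.
Proof.
move=> HX H1 H2; rewrite /homotopic.
apply: (ASSOC (y := y) (z := y) (g := idc y) (h := idc y) (fg := g) (gh := idc y)) => //.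
- exact: idc_hom.
- exact: sqD0.
Qed.

Lemma comp_hom (X : mcset) (x y z : X 0) (f g a : X 1) : hom1 x y f -> hom1 y z g ->
  is_composite x z f g a -> hom1 x z a.
Proof.
move=> [Hf0 Hf1] [Hg0 Hg1] [[s [_ [E1 E2 E3 E4]]]|[[s [_ [E1 E2 E3 E4]]]|[[s [_ [E1 E2 E3 E4]]]|[s [_ [E1 E2 E3 E4]]]]]].
- split.
  + by rewrite -E1 corner E3.
  + by rewrite -E1 corner E4 idc_end.
- split.
  + by rewrite -E2 corner E3 idc_end.
  + by rewrite -E2 corner E4.
- split.
  + by rewrite -E3 -corner E1.
  + by rewrite -E3 -corner E2 idc_end.
- split.
  + by rewrite -E4 -corner E1 idc_end.
  + by rewrite -E4 -corner E2.
Qed.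

Lemma NORM (X : mcset) (x y z : X 0) (f g a a1 : X 1) : comical X ->
  hom1 x y f -> hom1 y z g -> hom1 x z a1 ->
  is_composite x z f g a -> marked_sq a1 g f (idc z) -> homotopic z a a1.
Proof.
move=> HX Hf Hg Ha1 Hc H1.
have Ha := comp_hom Hf Hg Hc.
rewrite /homotopic.
case: Hc => [H|[H|[H|H]]].
- exact: (U1 HX (proj2 Hg) H H1).
- exact: (CONV2 HX Ha1 (proj2 Hg) H1 H).
- have H' := CONV3 HX Hg (proj2 Hf) H. exact: (U1 HX (proj2 Hg) H' H1).
- have H' := CONV4 HX Ha (proj2 Hg) H. exact: (U1 HX (proj2 Hg) H' H1).
Qed.

Lemma WD1 (X : mcset) (x y z : X 0) (f f' g g' a a' : X 1) : comical X ->
  hom1 x y f -> hom1 x y f' -> hom1 y z g -> hom1 y z g' ->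
  marked_sq a g f (idc z) -> marked_sq a' g' f' (idc z) ->
  homotopic y f f' -> homotopic z g g' -> homotopic z a a'.
Proof.
move=> HX Hf Hf' Hg Hg' H1 H2 Hff Hgg.
have Ha : hom1 x z a by apply: (comp_hom Hf Hg); left.
have S1 : marked_sq a g f' (idc z).
  apply: (ASSOC (y := y) (z := z) (g := idc y) (h := g) (fg := f) (gh := g)) => //.
  - exact: (h_sym HX Hf Hff).
  - exact: sqD1 Hg.
have S2 : marked_sq a g' f' (idc z).
  apply: (ASSOC (y := z) (z := z) (g := g) (h := idc z) (fg := a) (gh := g') (l := a)) => //.
  - exact: idc_hom.
  - exact: (h_refl Ha).
exact: (U1 HX (proj2 Hg') S2 H2).
Qed.

Lemma WDgen (X : mcset) (x y z : X 0) (f f' g g' a a' : X 1) : comical X ->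
  hom1 x y f -> hom1 x y f' -> hom1 y z g -> hom1 y z g' ->
  homotopic y f f' -> homotopic z g g' ->
  is_composite x z f g a -> is_composite x z f' g' a' ->
  homotopic z a a'.
Proof.
move=> HX Hf Hf' Hg Hg' Hff Hgg Ha Ha'.
have [a1 H1] := EXIST HX Hf Hg.
have [a1' H1'] := EXIST HX Hf' Hg'.
have Ha1 : hom1 x z a1 by apply: (comp_hom Hf Hg); left.
have Ha1' : hom1 x z a1' by apply: (comp_hom Hf' Hg'); left.
have Hh := comp_hom Hf Hg Ha.
have Hh' := comp_hom Hf' Hg' Ha'.
have N1 := NORM HX Hf Hg Ha1 Ha H1.
have N2 := NORM HX Hf' Hg' Ha1' Ha' H1'.
have W := WD1 HX Hf Hf' Hg Hg' H1 H1' Hff Hgg.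
apply: (h_trans HX N1); apply: (h_trans HX W); exact: (h_sym HX Hh' N2).
Qed.

Unset Implicit Arguments.

Theorem proposition4p7 (X : mcset) : comical X ->
  (forall (x y : X 0) (f : X 1), hom1 x y f -> homotopic y f f) /\
  (forall (x y : X 0) (f g : X 1), hom1 x y f -> hom1 x y g ->
     homotopic y f g -> homotopic y g f) /\
  (forall (x y : X 0) (f g h : X 1), hom1 x y f -> hom1 x y g -> hom1 x y h ->
     homotopic y f g -> homotopic y g h -> homotopic y f h) /\
  (forall x : X 0, hom1 x x (idc x)) /\
  (forall (x y z : X 0) (f g : X 1), hom1 x y f -> hom1 y z g ->
     exists a, is_composite x z f g a) /\
  (forall (x y z : X 0) (f g a : X 1), hom1 x y f -> hom1 y z g ->
     is_composite x z f g a -> hom1 x z a) /\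
  (forall (x y z : X 0) (f f' g g' a a' : X 1),
     hom1 x y f -> hom1 x y f' -> hom1 y z g -> hom1 y z g' ->
     homotopic y f f' -> homotopic z g g' ->
     is_composite x z f g a -> is_composite x z f' g' a' ->
     homotopic z a a') /\
  (forall (x y : X 0) (f a : X 1), hom1 x y f ->
     is_composite x y (idc x) f a -> homotopic y a f) /\
  (forall (x y : X 0) (f a : X 1), hom1 x y f ->
     is_composite x y f (idc y) a -> homotopic y a f) /\
  (forall (w x y z : X 0) (f g h fg gh l r : X 1),
     hom1 w x f -> hom1 x y g -> hom1 y z h ->
     is_composite w y f g fg -> is_composite x z g h gh ->
     is_composite w z fg h l -> is_composite w z f gh r ->
     homotopic z l r).
Proof.
move=> HX.
split; first by move=> x y f Hf; exact: h_refl Hf.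
split; first by move=> x y f g Hf _ H; exact: h_sym HX Hf H.
split; first by move=> x y f g h _ _ _ H1 H2; exact: h_trans HX H1 H2.
split; first by move=> x; exact: idc_hom.
split; first by move=> x y z f g Hf Hg; have [a Ha] := EXIST HX Hf Hg; exists a; left.
split; first by move=> x y z f g a Hf Hg Ha; exact: comp_hom Hf Hg Ha.
split; first by move=> x y z f f' g g' a a' Hf Hf' Hg Hg' H1 H2 Ha Ha'; exact: WDgen HX Hf Hf' Hg Hg' H1 H2 Ha Ha'.
split.
  move=> x y f a Hf Ha.
  exact: (NORM HX (idc_hom x) Hf Hf Ha (sqD1 Hf)).
split.
  move=> x y f a Hf Ha.
  exact: (NORM HX Hf (idc_hom y) Hf Ha (sqR (proj2 Hf))).
move=> w x y z f g h fg gh l r Hf Hg Hh Hfg Hgh Hl Hr.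
have Hfgh := comp_hom Hf Hg Hfg.
have Hghh := comp_hom Hg Hh Hgh.
have Hlh := comp_hom Hfgh Hh Hl.
have Hrh := comp_hom Hf Hghh Hr.
have [fg1 F1] := EXIST HX Hf Hg.
have [gh1 G1] := EXIST HX Hg Hh.
have Hfg1 : hom1 w y fg1 by apply: (comp_hom Hf Hg); left.
have Hgh1 : hom1 x z gh1 by apply: (comp_hom Hg Hh); left.
have [l1 L1] := EXIST HX Hfg1 Hh.
have [r1 R1] := EXIST HX Hf Hgh1.
have Hl1 : hom1 w z l1 by apply: (comp_hom Hfg1 Hh); left.
have Hr1 : hom1 w z r1 by apply: (comp_hom Hf Hgh1); left.
have A : marked_sq l1 gh1 f (idc z) := ASSOC HX Hh F1 G1 L1.
have LR : homotopic z l1 r1 := U1 HX (proj2 Hgh1) A R1.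
have Nfg := NORM HX Hf Hg Hfg1 Hfg F1.
have Ngh := NORM HX Hg Hh Hgh1 Hgh G1.
have Ll : homotopic z l l1.
  apply: (WDgen HX Hfgh Hfg1 Hh Hh Nfg (h_refl Hh) Hl); by left.
have Rr : homotopic z r r1.
  apply: (WDgen HX Hf Hf Hghh Hgh1 (h_refl Hf) Ngh Hr); by left.
apply: (h_trans HX Ll); apply: (h_trans HX LR); exact: (h_sym HX Hrh Rr).
Qed.
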